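(* Let $\mathbf t:\mathcal D\to\mathcal T$ be a refinement system and $c:A\to B$ in $\mathcal T$. For presheaves $\psi$ on $B^{-}$, $\rho$ on $B^{+}$, and $\sigma$ on $A^{-}$: (a) $(c^{+})^*({}^{\perp_B}\psi)\cong{}^{\perp_A}\big((c^{-})_!\psi\big)$ as presheaves on $A^{+}$; (b) there is a natural transformation $(c^{-})_!(\rho^{\perp_B})\Rightarrow\big((c^{+})^*\rho\big)^{\perp_A}$ of presheaves on $A^{-}$; (c) there is a natural transformation $(c^{+})_!({}^{\perp_A}\sigma)\Rightarrow{}^{\perp_B}\big((c^{-})^*\sigma\big)$ of presheaves on $B^{+}$.
   Context: A refinement system is a functor $\mathbf{t}:\mathcal{D}\to\mathcal{T}$; composition is diagrammatic. Write $P\sqsubset A$ if $\mathbf t(P)=A$; a derivation of $P\Rightarrow_cQ$ is a morphism $\alpha:P\to Q$ with $\mathbf t(\alpha)=c$. For $B\in\mathcal T$: $B^{+}$ has objects $(P,c)$, $P\sqsubset X$, $c:X\to B$, morphisms $(P_1,c_1)\to(P_2,c_2)$ the derivations of $P_1\Rightarrow_eP_2$ with $c_1=e;c_2$; $B^{-}$ is the opposite of the category with objects $(d,R)$, $d:B\to Y$, $R\sqsubset Y$, morphisms $(d_1,R_1)\to(d_2,R_2)$ the derivations of $R_1\Rightarrow_eR_2$ with $d_1;e=d_2$. For $c:A\to B$: $c^{+}:A^{+}\to B^{+}$, $(P,e)\mapsto(P,e;c)$, and $c^{-}:B^{-}\to A^{-}$, $(d,R)\mapsto(c;d,R)$, identity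 on derivations. $\mathrm{Jdg}(\mathbf t)$ has objects $(P,c,R)$ and morphisms $(P_1,c_1,R_1)\to(P_2,c_2,R_2)$ pairs of derivations $\beta$ of $P_1\Rightarrow_eP_2$, $\gamma$ of $R_2\Rightarrow_{e'}R_1$ with $c_1=e;c_2;e'$; $\mathrm{Der}:\mathrm{Jdg}(\mathbf t)^{op}\to\mathbf{Set}$ sends $(P,c,R)$ to the set of derivations of $P\Rightarrow_cR$ and $(\beta,\gamma)$ to $\alpha\mapsto\beta;\alpha;\gamma$. Bracket $\langle-\mid-\rangle_B:B^{+}\times B^{-}\to\mathrm{Jdg}(\mathbf t)$: $((P,c),(d,R))\mapsto(P,c;d,R)$, $(\beta,\gamma)\mapsto(\beta,\gamma)$. Duals with respect to $B$: for $\phi$ on $B^{+}$, $\phi^{\perp_B}(y)=$ the set of natural transformations $\phi\Rightarrow\mathrm{Der}(\langle-\mid y\rangle_B)$ (a presheaf on $B^{-}$); for $\psi$ on $B^{-}$, ${}^{\perp_B}\psi(x)=$ the set of natural transformations $\psi\Rightarrow\mathrm{Der}(\langle x\mid-\rangle_B)$ (a presheaf on $B^{+}$); similarly for $A$. For a functor $F:\mathcal X\to\mathcal Y$: $F^*\psi=\psi\circ F^{op}$ and $F_!\chi(y)=\int^{x}\mathcal Y(y,Fx)\times\chi(x)$. *)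

(* Defs.v *)
From Stdlib Require Import ProofIrrelevance Relations.Relation_Operators.

Set Implicit Arguments.
Unset Strict Implicit.

Lemma sig_eq A (P : A -> Prop) (x y : sig P) :
  proj1_sig x = proj1_sig y -> x = y.
Proof. destruct x, y; simpl; intros ->; f_equal; apply proof_irrelevance. Qed.

(** Categories, composition written diagrammatically: [f ;; g] = "f then g". *)
Record Category := Cat {
  ob : Type;
  hom : ob -> ob -> Type;
  idm : forall a, hom a a;
  comp : forall a b c, hom a b -> hom b c -> hom a c;
  comp_id_l : forall a b (f : hom a b), comp (idm a) f = f;
  comp_id_r : forall a b (f : hom a b), comp f (idm b) = f;
  comp_assoc : forall a b c d (f : hom a b) (g : hom b c) (h : hom c d),
      comp (comp f g) h = comp f (comp g h)
}.

Notation "f ;; g" := (comp f g) (at level 40, left associativity).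

Definition op (C : Category) : Category.
Proof.
  refine (@Cat (ob C) (fun a b => hom b a) (@idm C)
            (fun a b c f g => comp g f) _ _ _).
  - intros; apply comp_id_r.
  - intros; apply comp_id_l.
  - intros; symmetry; apply comp_assoc.
Defined.

Record Functor (C D : Category) := Fun {
  fobj : ob C -> ob D;
  fmap : forall a b, hom a b -> hom (fobj a) (fobj b);
  fmap_id : forall a, fmap (idm a) = idm (fobj a);
  fmap_comp : forall a b c (f : hom a b) (g : hom b c),
      fmap (f ;; g) = fmap f ;; fmap g
}.

(** Presheaves (functors C^op -> Set), given as data; the functor laws are
    the separate predicate [is_presheaf]. *)
Record Presheaf (C : Category) := Psh {
  pobj : ob C -> Type;
  pmap : forall a b, hom a b -> pobj b -> pobj a
}.

Arguments pobj {C} _ _.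
Arguments pmap {C} _ {a b} _ _.
Arguments fobj {C D} _ _.
Arguments fmap {C D} _ {a b} _.

Definition is_presheaf C (P : Presheaf C) : Prop :=
  (forall a (x : pobj P a), pmap P (idm a) x = x) /\
  (forall a b c (f : hom a b) (g : hom b c) (x : pobj P c),
      pmap P (f ;; g) x = pmap P f (pmap P g x)).

Definition NatTrans C (P Q : Presheaf C) : Type :=
  { eta : forall a, pobj P a -> pobj Q a |
    forall a b (f : hom a b) (x : pobj P b),
      eta a (pmap P f x) = pmap Q f (eta b x) }.

Definition psh_iso C (P Q : Presheaf C) : Prop :=
  exists (eta : NatTrans P Q) (theta : NatTrans Q P),
    (forall a x, proj1_sig theta a (proj1_sig eta a x) = x) /\
    (forall a y, proj1_sig eta a (proj1_sig theta a y) = y).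

Definition pullback X Y (F : Functor X Y) (psi : Presheaf Y) : Presheaf X :=
  @Psh X (fun x => pobj psi (fobj F x))
         (fun a b f u => pmap psi (fmap F f) u).

(** Left Kan extension F_! chi (y) = \int^x Y(y, F x) x chi(x),
    the coend being the quotient of the sum by the equivalence relation
    generated by (x, g, chi(f) u) ~ (x', g;F f, u) for f : x -> x'. *)
Section Lan.
Variables (X Y : Category) (F : Functor X Y) (chi : Presheaf X).

Definition tri (y : ob Y) : Type :=
  { x : ob X & (hom y (fobj F x) * pobj chi x)%type }.

Inductive lan_step (y : ob Y) : tri y -> tri y -> Prop :=
| lan_step_intro : forall x x' (f : hom x x') (g : hom y (fobj F x))
                     (u : pobj chi x'),
    lan_step (existT _ x (g, pmap chi f u))
             (existT _ x' (g ;; fmap F f, u)).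

Definition lan_rel (y : ob Y) := clos_refl_sym_trans (tri y) (@lan_step y).

Definition lan_obj (y : ob Y) : Type :=
  { S : tri y -> Prop | exists p, forall q, S q <-> lan_rel p q }.

Definition lan_act (y' y : ob Y) (h : hom y' y) (p : tri y) : tri y' :=
  existT _ (projT1 p) (h ;; fst (projT2 p), snd (projT2 p)).

Lemma lan_act_compat y' y (h : hom y' y) p q :
  lan_rel p q -> lan_rel (lan_act h p) (lan_act h q).
Proof.
  induction 1.
  - destruct H. unfold lan_act; simpl.
    apply rst_step. rewrite <- comp_assoc. constructor.
  - apply rst_refl.
  - apply rst_sym; assumption.
  - eapply rst_trans; eassumption.
Qed.

Lemma lan_map_proof y' y (h : hom y' y) (S : lan_obj y) :
  exists p, forall q,
    (exists p', proj1_sig S p' /\ lan_rel q (lan_act h p')) <-> lan_rel p q.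
Proof.
  destruct (proj2_sig S) as [p0 Hp0].
  exists (lan_act h p0); intros q; split.
  - intros [p [Sp Hq]]. apply Hp0 in Sp.
    eapply rst_trans. apply (lan_act_compat h Sp). apply rst_sym; exact Hq.
  - intros H. exists p0; split.
    + apply Hp0; apply rst_refl.
    + apply rst_sym; exact H.
Qed.

Definition lan_map y' y (h : hom y' y) (S : lan_obj y) : lan_obj y' :=
  exist _ (fun q => exists p', proj1_sig S p' /\ lan_rel q (lan_act h p'))
        (lan_map_proof h S).

Definition lan : Presheaf Y := @Psh Y lan_obj lan_map.
End Lan.

Section Refinement.
Variables (D T : Category) (t : Functor D T).

Record pobjT (B : ob T) := PObj { pP : ob D; pc : hom (fobj t pP) B }.

Definition Bplus (B : ob T) : Category.
Proof.
  unshelve refine (@Cat (pobjT B)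
     (fun x y => { al : hom (pP x) (pP y) | pc x = fmap t al ;; pc y })
     (fun x => exist _ (idm (pP x)) _)
     (fun x y z f g => exist _ (proj1_sig f ;; proj1_sig g) _) _ _ _).
  - rewrite fmap_id, comp_id_l; reflexivity.
  - rewrite fmap_comp, comp_assoc, <- (proj2_sig g), <- (proj2_sig f);
      reflexivity.
  - intros; apply sig_eq; simpl; apply comp_id_l.
  - intros; apply sig_eq; simpl; apply comp_id_r.
  - intros; apply sig_eq; simpl; apply comp_assoc.
Defined.

Record nobjT (B : ob T) := NObj { nR : ob D; nd : hom B (fobj t nR) }.

Definition Bminus_pre (B : ob T) : Category.
Proof.
  unshelve refine (@Cat (nobjT B)
     (fun x y => { al : hom (nR x) (nR y) | nd x ;; fmap t al = nd y })
     (fun x => exist _ (idm (nR x)) _)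
     (fun x y z f g => exist _ (proj1_sig f ;; proj1_sig g) _) _ _ _).
  - rewrite fmap_id, comp_id_r; reflexivity.
  - rewrite fmap_comp, <- comp_assoc, (proj2_sig f), (proj2_sig g);
      reflexivity.
  - intros; apply sig_eq; simpl; apply comp_id_l.
  - intros; apply sig_eq; simpl; apply comp_id_r.
  - intros; apply sig_eq; simpl; apply comp_assoc.
Defined.

Definition Bminus (B : ob T) : Category := op (Bminus_pre B).

Record jobj := JObj { jP : ob D; jR : ob D; jc : hom (fobj t jP) (fobj t jR) }.

Record jhom (a b : jobj) := JHom {
  jb : hom (jP a) (jP b);
  jg : hom (jR b) (jR a);
  jeq : jc a = fmap t jb ;; jc b ;; fmap t jg }.

Lemma jhom_eq a b (f g : jhom a b) : jb f = jb g -> jg f = jg g -> f = g.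
Proof.
  destruct f, g; simpl; intros -> ->; f_equal; apply proof_irrelevance.
Qed.

Definition Jdg : Category.
Proof.
  unshelve refine (@Cat jobj jhom
     (fun a => @JHom a a (idm (jP a)) (idm (jR a)) _)
     (fun a b c f g => @JHom a c (jb f ;; jb g) (jg g ;; jg f) _) _ _ _).
  - rewrite !fmap_id, comp_id_l, comp_id_r; reflexivity.
  - rewrite (jeq f), (jeq g), !fmap_comp, !comp_assoc; reflexivity.
  - intros; apply jhom_eq; simpl; [apply comp_id_l | apply comp_id_r].
  - intros; apply jhom_eq; simpl; [apply comp_id_r | apply comp_id_l].
  - intros; apply jhom_eq; simpl; [apply comp_assoc | symmetry; apply comp_assoc].
Defined.

Definition Der_obj (j : jobj) : Type :=
  { al : hom (jP j) (jR j) | fmap t al = jc j }.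

Definition Der_map a b (f : jhom a b) (al : Der_obj b) : Der_obj a.
Proof.
  refine (exist _ (jb f ;; proj1_sig al ;; jg f) _).
  rewrite !fmap_comp, (proj2_sig al); symmetry; exact (jeq f).
Defined.

Definition Der : Presheaf Jdg := @Psh Jdg Der_obj Der_map.

Definition bra (B : ob T) (x : pobjT B) (y : nobjT B) : jobj :=
  JObj (pc x ;; nd y).

Definition bra_mor (B : ob T) (x1 x2 : ob (Bplus B)) (y1 y2 : ob (Bminus B))
  (f : hom x1 x2) (g : hom y1 y2) : @hom Jdg (bra x1 y1) (bra x2 y2).
Proof.
  refine (@JHom (bra x1 y1) (bra x2 y2) (proj1_sig f) (proj1_sig g) _).
  simpl. generalize (proj2_sig f) (proj2_sig g). generalize (proj1_sig f) (proj1_sig g). intros bf gg Hf Hg. simpl in *. rewrite Hf, <- Hg, !comp_assoc; reflexivity.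
Defined.

Definition DerL (B : ob T) (y : ob (Bminus B)) : Presheaf (Bplus B) :=
  @Psh (Bplus B) (fun x => pobj Der (bra x y))
       (fun a b f w => pmap Der (bra_mor f (idm y)) w).

Definition DerR (B : ob T) (x : ob (Bplus B)) : Presheaf (Bminus B) :=
  @Psh (Bminus B) (fun y => pobj Der (bra x y))
       (fun a b g w => pmap Der (bra_mor (idm x) g) w).

Definition perpR_map (B : ob T) (phi : Presheaf (Bplus B))
  (y1 y2 : ob (Bminus B)) (g : hom y1 y2) (eta : NatTrans phi (DerL y2))
  : NatTrans phi (DerL y1).
Proof.
  refine (exist _ (fun a u => pmap Der (bra_mor (idm a) g) (proj1_sig eta a u)) _).
  intros a b f u. rewrite (proj2_sig eta). apply sig_eq. simpl.
  rewrite !(@comp_id_l D), !(@comp_id_r D), !(@comp_assoc D); reflexivity.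
Defined.

Definition perpR (B : ob T) (phi : Presheaf (Bplus B)) : Presheaf (Bminus B) :=
  @Psh (Bminus B) (fun y => NatTrans phi (DerL y)) (@perpR_map B phi).

Definition perpL_map (B : ob T) (psi : Presheaf (Bminus B))
  (x1 x2 : ob (Bplus B)) (f : hom x1 x2) (eta : NatTrans psi (DerR x2))
  : NatTrans psi (DerR x1).
Proof.
  refine (exist _ (fun y u => pmap Der (bra_mor f (idm y)) (proj1_sig eta y u)) _).
  intros a b g u. rewrite (proj2_sig eta). apply sig_eq. simpl.
  rewrite !(@comp_id_l D), !(@comp_id_r D), !(@comp_assoc D); reflexivity.
Defined.

Definition perpL (B : ob T) (psi : Presheaf (Bminus B)) : Presheaf (Bplus B) :=
  @Psh (Bplus B) (fun x => NatTrans psi (DerR x)) (@perpL_map B psi).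

Definition cplus (A B : ob T) (c : hom A B) : Functor (Bplus A) (Bplus B).
Proof.
  unshelve refine (@Fun (Bplus A) (Bplus B) (fun x => PObj (pc x ;; c))
     (fun x y f => exist _ (proj1_sig f) _) _ _).
  - simpl. generalize (proj2_sig f); generalize (proj1_sig f); intros al H; simpl in *. rewrite H, comp_assoc; reflexivity.
  - intros; apply sig_eq; reflexivity.
  - intros; apply sig_eq; reflexivity.
Defined.

Definition cminus (A B : ob T) (c : hom A B) : Functor (Bminus B) (Bminus A).
Proof.
  unshelve refine (@Fun (Bminus B) (Bminus A) (fun y => NObj (c ;; nd y))
     (fun x y f => exist _ (proj1_sig f) _) _ _).
  - simpl. generalize (proj2_sig f); generalize (proj1_sig f); intros al H; simpl in *. rewrite comp_assoc, H; reflexivity.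
  - intros; apply sig_eq; reflexivity.
  - intros; apply sig_eq; reflexivity.
Defined.

End Refinement.

(* Main.v *)
Require Import Defs.
From Stdlib Require Import ProofIrrelevance Relations.Relation_Operators
  FunctionalExtensionality PropExtensionality ClassicalEpsilon.
Set Implicit Arguments.

Lemma nt_eq C (P Q : Presheaf C) (e1 e2 : NatTrans P Q) :
  (forall a x, proj1_sig e1 a x = proj1_sig e2 a x) -> e1 = e2.
Proof.
  intros H; apply sig_eq; apply functional_extensionality_dep; intro a;
  apply functional_extensionality; apply H.
Qed.

Definition cls X Y (F : Functor X Y) (chi : Presheaf X) y (p : tri F chi y)
  : lan_obj F chi y :=
  exist _ (lan_rel p) (ex_intro _ p (fun q => conj (fun h => h) (fun h => h))).

Lemma lan_obj_eq X Y (F : Functor X Y) (chi : Presheaf X) y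
  (S1 S2 : lan_obj F chi y) :
  (forall q, proj1_sig S1 q <-> proj1_sig S2 q) -> S1 = S2.
Proof.
  intros H; apply sig_eq; apply functional_extensionality; intro q;
  apply propositional_extensionality; apply H.
Qed.

Lemma cls_surj X Y (F : Functor X Y) (chi : Presheaf X) y (S : lan_obj F chi y) :
  exists p, S = cls p.
Proof.
  destruct (proj2_sig S) as [p Hp]. exists p. apply lan_obj_eq. exact Hp.
Qed.

Lemma cls_eq X Y (F : Functor X Y) (chi : Presheaf X) y (p q : tri F chi y) :
  lan_rel p q -> cls p = cls q.
Proof.
  intros H. apply lan_obj_eq; simpl; intros r; split; intros H'.
  - eapply rst_trans; [apply rst_sym; exact H| exact H'].
  - eapply rst_trans; [exact H| exact H'].
Qed.

Lemma lan_map_cls X Y (F : Functor X Y) (chi : Presheaf X) y' y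
  (h : hom y' y) (p : tri F chi y) :
  lan_map h (cls p) = cls (lan_act h p).
Proof.
  apply lan_obj_eq; simpl; intros q; split.
  - intros [p' [H1 H2]]. eapply rst_trans. apply (lan_act_compat h H1).
    apply rst_sym; exact H2.
  - intros H. exists p; split. apply rst_refl. apply rst_sym; exact H.
Qed.

Definition lan_lift X Y (F : Functor X Y) (chi : Presheaf X) y Z
  (f : tri F chi y -> Z) (S : lan_obj F chi y) : Z :=
  f (proj1_sig (constructive_indefinite_description _ (proj2_sig S))).

Lemma resp_rel X Y (F : Functor X Y) (chi : Presheaf X) y Z
  (f : tri F chi y -> Z) :
  (forall p q, lan_step p q -> f p = f q) ->
  forall p q, lan_rel p q -> f p = f q.
Proof.
  intros Hf p q H; induction H; auto. congruence.
Qed.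

Lemma lan_lift_cls X Y (F : Functor X Y) (chi : Presheaf X) y Z
  (f : tri F chi y -> Z) :
  (forall p q, lan_step p q -> f p = f q) ->
  forall p, lan_lift f (cls p) = f p.
Proof.
  intros Hf p. unfold lan_lift.
  destruct (constructive_indefinite_description _ _) as [r Hr]; simpl.
  symmetry. apply (@resp_rel _ _ _ _ _ _ f Hf). apply Hr. apply rst_refl.
Qed.

Definition fb_comp (D T : Category) (t : Functor D T) (A B : ob T) (c : hom A B)
  (rho : Presheaf (Bplus t B)) (y' : ob (Bminus t A))
  (p : tri (cminus t c) (perpR rho) y') (x : ob (Bplus t A))
  (v : pobj (pullback (cplus t c) rho) x) : pobj (DerL y') x.
Proof.
  destruct p as [y [g eta]].
  refine (exist _ (proj1_sig (proj1_sig eta (fobj (cplus t c) x) v) ;; proj1_sig g) _).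
  pose proof (proj2_sig (proj1_sig eta (fobj (cplus t c) x) v)) as H.
  destruct g as [gal Hg]. simpl in *.
  rewrite fmap_comp, H. rewrite <- Hg, !comp_assoc. reflexivity.
Defined.

Lemma fb_nat (D T : Category) (t : Functor D T) (A B : ob T) (c : hom A B)
  (rho : Presheaf (Bplus t B)) (y' : ob (Bminus t A))
  (p : tri (cminus t c) (perpR rho) y') :
  forall x1 x2 (h : hom x1 x2) v,
    fb_comp p x1 (pmap (pullback (cplus t c) rho) h v)
    = pmap (DerL y') h (fb_comp p x2 v).
Proof.
  intros x1 x2 h v. destruct p as [y [g eta]]. apply sig_eq. simpl.
  rewrite (proj2_sig eta). simpl.
  rewrite ?(@comp_id_l D), ?(@comp_id_r D), ?(@comp_assoc D). reflexivity.
Qed.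

Definition fb (D T : Category) (t : Functor D T) (A B : ob T) (c : hom A B)
  (rho : Presheaf (Bplus t B)) (y' : ob (Bminus t A))
  (p : tri (cminus t c) (perpR rho) y') :
  pobj (perpR (pullback (cplus t c) rho)) y' :=
  exist _ (fb_comp p) (fb_nat p).

Lemma fb_step (D T : Category) (t : Functor D T) (A B : ob T) (c : hom A B)
  (rho : Presheaf (Bplus t B)) (y' : ob (Bminus t A))
  (p q : tri (cminus t c) (perpR rho) y') : lan_step p q -> fb p = fb q.
Proof.
  intros H; destruct H. apply nt_eq; intros a v. apply sig_eq. simpl.
  rewrite ?(@comp_id_l D), ?(@comp_id_r D), ?(@comp_assoc D). reflexivity.
Qed.

Definition fbT (D T : Category) (t : Functor D T) (A B : ob T) (c : hom A B)
  (rho : Presheaf (Bplus t B)) :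
  NatTrans (lan (cminus t c) (perpR rho)) (perpR (pullback (cplus t c) rho)).
Proof.
  refine (exist _ (fun y' S => lan_lift (@fb D T t A B c rho y') S) _).
  intros a b h S. destruct (cls_surj S) as [p ->].
  simpl. rewrite lan_map_cls, !lan_lift_cls by apply fb_step.
  destruct p as [y [g eta]].
  apply nt_eq; intros x v. apply sig_eq. simpl.
  rewrite ?(@comp_id_l D), ?(@comp_id_r D), ?(@comp_assoc D). reflexivity.
Defined.

Definition fc_comp (D T : Category) (t : Functor D T) (A B : ob T) (c : hom A B)
  (sigma : Presheaf (Bminus t A)) (x' : ob (Bplus t B))
  (p : tri (cplus t c) (perpL sigma) x') (y : ob (Bminus t B))
  (u : pobj (pullback (cminus t c) sigma) y) : pobj (DerR x') y.
Proof.
  destruct p as [x [g eta]].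
  refine (exist _ (proj1_sig g ;; proj1_sig (proj1_sig eta (fobj (cminus t c) y) u)) _).
  pose proof (proj2_sig (proj1_sig eta (fobj (cminus t c) y) u)) as H.
  destruct g as [gal Hg]. simpl in *.
  rewrite fmap_comp, H, Hg, !comp_assoc. reflexivity.
Defined.

Lemma fc_nat (D T : Category) (t : Functor D T) (A B : ob T) (c : hom A B)
  (sigma : Presheaf (Bminus t A)) (x' : ob (Bplus t B))
  (p : tri (cplus t c) (perpL sigma) x') :
  forall y1 y2 (h : hom y1 y2) u,
    fc_comp p y1 (pmap (pullback (cminus t c) sigma) h u)
    = pmap (DerR x') h (fc_comp p y2 u).
Proof.
  intros y1 y2 h u. destruct p as [x [g eta]]. apply sig_eq. simpl.
  rewrite (proj2_sig eta). simpl.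
  rewrite ?(@comp_id_l D), ?(@comp_id_r D), ?(@comp_assoc D). reflexivity.
Qed.

Definition fc (D T : Category) (t : Functor D T) (A B : ob T) (c : hom A B)
  (sigma : Presheaf (Bminus t A)) (x' : ob (Bplus t B))
  (p : tri (cplus t c) (perpL sigma) x') :
  pobj (perpL (pullback (cminus t c) sigma)) x' :=
  exist _ (fc_comp p) (fc_nat p).

Lemma fc_step (D T : Category) (t : Functor D T) (A B : ob T) (c : hom A B)
  (sigma : Presheaf (Bminus t A)) (x' : ob (Bplus t B))
  (p q : tri (cplus t c) (perpL sigma) x') : lan_step p q -> fc p = fc q.
Proof.
  intros H; destruct H. apply nt_eq; intros a v. apply sig_eq. simpl.
  rewrite ?(@comp_id_l D), ?(@comp_id_r D), ?(@comp_assoc D). reflexivity.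
Qed.

Definition fcT (D T : Category) (t : Functor D T) (A B : ob T) (c : hom A B)
  (sigma : Presheaf (Bminus t A)) :
  NatTrans (lan (cplus t c) (perpL sigma)) (perpL (pullback (cminus t c) sigma)).
Proof.
  refine (exist _ (fun x' S => lan_lift (@fc D T t A B c sigma x') S) _).
  intros a b h S. destruct (cls_surj S) as [p ->].
  simpl. rewrite lan_map_cls, !lan_lift_cls by apply fc_step.
  destruct p as [x [g eta]].
  apply nt_eq; intros y v. apply sig_eq. simpl.
  rewrite ?(@comp_id_l D), ?(@comp_id_r D), ?(@comp_assoc D). reflexivity.
Defined.

Definition fa_comp (D T : Category) (t : Functor D T) (A B : ob T) (c : hom A B)
  (psi : Presheaf (Bminus t B)) (x : ob (Bplus t A))
  (eta : pobj (pullback (cplus t c) (perpL psi)) x) (y' : ob (Bminus t A))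
  (p : tri (cminus t c) psi y') : pobj (DerR x) y'.
Proof.
  destruct p as [y [g u]].
  refine (exist _ (proj1_sig (proj1_sig eta y u) ;; proj1_sig g) _).
  pose proof (proj2_sig (proj1_sig eta y u)) as H.
  destruct g as [gal Hg]. simpl in *.
  rewrite fmap_comp, H, <- Hg, !comp_assoc. reflexivity.
Defined.

Lemma fa_step (D T : Category) (t : Functor D T) (A B : ob T) (c : hom A B)
  (psi : Presheaf (Bminus t B)) (x : ob (Bplus t A))
  (eta : pobj (pullback (cplus t c) (perpL psi)) x) (y' : ob (Bminus t A))
  (p q : tri (cminus t c) psi y') : lan_step p q -> fa_comp eta p = fa_comp eta q.
Proof.
  intros H; destruct H. apply sig_eq. simpl.
  rewrite (proj2_sig eta). simpl.
  rewrite ?(@comp_id_l D), ?(@comp_id_r D), ?(@comp_assoc D). reflexivity.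
Qed.

Definition fa (D T : Category) (t : Functor D T) (A B : ob T) (c : hom A B)
  (psi : Presheaf (Bminus t B)) (x : ob (Bplus t A))
  (eta : pobj (pullback (cplus t c) (perpL psi)) x) :
  pobj (perpL (lan (cminus t c) psi)) x.
Proof.
  refine (exist _ (fun y' S => lan_lift (@fa_comp D T t A B c psi x eta y') S) _).
  intros a b h S. destruct (cls_surj S) as [p ->].
  simpl. rewrite lan_map_cls, !lan_lift_cls by apply fa_step.
  destruct p as [y [g u]].
  apply sig_eq. simpl.
  rewrite ?(@comp_id_l D), ?(@comp_id_r D), ?(@comp_assoc D). reflexivity.
Defined.

Definition ga_comp (D T : Category) (t : Functor D T) (A B : ob T) (c : hom A B)
  (psi : Presheaf (Bminus t B)) (x : ob (Bplus t A))
  (th : pobj (perpL (lan (cminus t c) psi)) x) (y : ob (Bminus t B))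
  (u : pobj psi y) : pobj (DerR (fobj (cplus t c) x)) y.
Proof.
  pose (w := proj1_sig th (fobj (cminus t c) y)
               (cls (existT _ y (idm (fobj (cminus t c) y), u)))).
  refine (exist _ (proj1_sig w) _).
  pose proof (proj2_sig w) as H. simpl in *. rewrite H, comp_assoc. reflexivity.
Defined.

Lemma ga_nat (D T : Category) (t : Functor D T) (A B : ob T) (c : hom A B)
  (psi : Presheaf (Bminus t B)) (x : ob (Bplus t A))
  (th : pobj (perpL (lan (cminus t c) psi)) x) :
  forall y1 y2 (f : hom y1 y2) u,
    ga_comp th y1 (pmap psi f u) = pmap (DerR (fobj (cplus t c) x)) f (ga_comp th y2 u).
Proof.
  intros y1 y2 f u. apply sig_eq.
  assert (E : cls (existT (fun x0 => (hom (fobj (cminus t c) y1) (fobj (cminus t c) x0) * pobj psi x0)%type)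
                 y1 (idm (fobj (cminus t c) y1), pmap psi f u))
            = pmap (lan (cminus t c) psi) (fmap (cminus t c) f)
               (cls (existT (fun x0 => (hom (fobj (cminus t c) y2) (fobj (cminus t c) x0) * pobj psi x0)%type) y2 (idm (fobj (cminus t c) y2), u)))).
  { cbn [pmap lan]. rewrite lan_map_cls. apply cls_eq. unfold lan_act; cbn [projT1 projT2 fst snd].
    eapply rst_trans. apply rst_step. apply (@lan_step_intro _ _ (cminus t c) psi _ _ _ f (idm _) u).
    rewrite (@comp_id_l (Bminus t A)), (@comp_id_r (Bminus t A)). apply rst_refl. }
  unfold ga_comp. cbn [proj1_sig]. rewrite E, (proj2_sig th). simpl.
  rewrite ?(@comp_id_l D), ?(@comp_id_r D), ?(@comp_assoc D). reflexivity.
Qed.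

Definition ga (D T : Category) (t : Functor D T) (A B : ob T) (c : hom A B)
  (psi : Presheaf (Bminus t B)) (x : ob (Bplus t A))
  (th : pobj (perpL (lan (cminus t c) psi)) x) :
  pobj (pullback (cplus t c) (perpL psi)) x :=
  exist _ (ga_comp th) (ga_nat th).

Definition faT (D T : Category) (t : Functor D T) (A B : ob T) (c : hom A B)
  (psi : Presheaf (Bminus t B)) :
  NatTrans (pullback (cplus t c) (perpL psi)) (perpL (lan (cminus t c) psi)).
Proof.
  refine (exist _ (@fa D T t A B c psi) _).
  intros a b h eta. apply nt_eq; intros y' S. destruct (cls_surj S) as [p ->].
  simpl. rewrite !lan_lift_cls by apply fa_step.
  destruct p as [y [g u]]. apply sig_eq. simpl.
  rewrite ?(@comp_id_l D), ?(@comp_id_r D), ?(@comp_assoc D). reflexivity.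
Defined.

Definition gaT (D T : Category) (t : Functor D T) (A B : ob T) (c : hom A B)
  (psi : Presheaf (Bminus t B)) :
  NatTrans (perpL (lan (cminus t c) psi)) (pullback (cplus t c) (perpL psi)).
Proof.
  refine (exist _ (@ga D T t A B c psi) _).
  intros a b h th. apply nt_eq; intros y u. apply sig_eq. simpl.
  rewrite ?(@comp_id_l D), ?(@comp_id_r D), ?(@comp_assoc D). reflexivity.
Defined.

Lemma a_iso (D T : Category) (t : Functor D T) (A B : ob T) (c : hom A B)
  (psi : Presheaf (Bminus t B)) :
  psh_iso (pullback (cplus t c) (perpL psi)) (perpL (lan (cminus t c) psi)).
Proof.
  exists (@faT D T t A B c psi), (@gaT D T t A B c psi). split.
  - intros x eta. apply nt_eq; intros y u. apply sig_eq. simpl.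
    rewrite lan_lift_cls by apply fa_step. simpl.
    rewrite ?(@comp_id_l D), ?(@comp_id_r D), ?(@comp_assoc D). reflexivity.
  - intros x th. apply nt_eq; intros y' S. destruct (cls_surj S) as [p ->].
    cbn [proj1_sig faT fa]. rewrite lan_lift_cls by apply fa_step.
    destruct p as [y [g u]].
    assert (E : cls (existT (fun x0 => (hom y' (fobj (cminus t c) x0) * pobj psi x0)%type) y (g, u))
       = pmap (lan (cminus t c) psi) g
           (cls (existT (fun x0 => (hom (fobj (cminus t c) y) (fobj (cminus t c) x0) * pobj psi x0)%type) y (idm (fobj (cminus t c) y), u)))).
    { cbn [pmap lan]. rewrite lan_map_cls. unfold lan_act; cbn [projT1 projT2 fst snd].
      rewrite (@comp_id_r (Bminus t A)). reflexivity. }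
    rewrite E, (proj2_sig th). apply sig_eq. simpl.
    rewrite ?(@comp_id_l D), ?(@comp_id_r D), ?(@comp_assoc D). reflexivity.
Qed.

Theorem corollary4p12 (D T : Category) (t : Functor D T) (A B : ob T)
  (c : hom A B)
  (psi : Presheaf (Bminus t B)) (rho : Presheaf (Bplus t B))
  (sigma : Presheaf (Bminus t A)) :
  is_presheaf psi -> is_presheaf rho -> is_presheaf sigma ->
  psh_iso (pullback (cplus t c) (perpL psi))
          (perpL (lan (cminus t c) psi)) /\
  inhabited (NatTrans (lan (cminus t c) (perpR rho))
                      (perpR (pullback (cplus t c) rho))) /\
  inhabited (NatTrans (lan (cplus t c) (perpL sigma))
                      (perpL (pullback (cminus t c) sigma))).
Proof.
  intros _ _ _. split; [|split].
  - apply a_iso.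
  - constructor. exact (@fbT D T t A B c rho).
  - constructor. exact (@fcT D T t A B c sigma).
Qed.
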